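(* With the notation of the context, assume that every distinct affine local piece of $u^*$ on $\Omega$ appears among the sampled functions $u_1,\dots,u_{N_s}$. Define $\varepsilon=\max_{\bm x\in\Omega}\big(\hat f_{\mathrm{L,c}}(\bm x)-\hat f_{\mathrm{L,d}}(\bm x)\big)$. Then for all $\bm x\in\Omega$, $$-\varepsilon\le \hat f_{\mathrm{L,d}}(\bm x)-u^*(\bm x)\le 0\qquad\text{and}\qquad 0\le \hat f_{\mathrm{L,c}}(\bm x)-u^*(\bm x)\le\varepsilon;$$ in particular $\hat f_{\mathrm{L,d}}\le u^*\le\hat f_{\mathrm{L,c}}$ on $\Omega$. Furthermore, if $\varepsilon=0$, then $\hat f_{\mathrm{L,d}}(\bm x)=\hat f_{\mathrm{L,c}}(\bm x)=u^*(\bm x)$ for all $\bm x\in\Omega$.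
   Context: Let $\Omega\subseteq\mathbb{R}^{n_x}$ be a convex polyhedron (a hyperbox) and $u^*:\Omega\to\mathbb{R}$ a continuous piecewise affine (PWA) function: $\Omega$ is the union of finitely many closed convex polyhedra (local regions) with pairwise disjoint interiors, and on each local region $u^*$ coincides with an affine function (its local piece). (In the paper $u^*$ is the first input of the explicit linear MPC law.) A unique order (UO) region is a closed convex polyhedron contained in a local region on whose interior the order of all distinct local pieces of $u^*$ is constant; $\Omega$ is the union of finitely many UO regions. Sample points $\bm x_1,\dots,\bm x_{N_s}\in\Omega$ are given, each in the interior of a UO region $\Gamma(\bm x_i)$, and $u_i$ denotes the local piece of $u^*$ on $\Gamma(\bm x_i)$. Define $J_{\geq,i}=\{j\in\{1,\dots,N_s\}: u_j(\bm x_i)\ge u_i(\bm x_i)\}$, $J_{\leq,i}=\{j\in\{1,\dots,N_s\}: u_j(\bm x_i)\le u_i(\bm x_i)\}$, $\hat f_{\mathrm{L,d}}(\bm x)=\max_{i=1,\dots,N_s}\min_{j\in J_{\geq,i}}u_j(\bm x)$ and $\hat f_{\mathrm{L,c}}(\bm x)=\min_{i=1,\dots,N_s}\max_{j\in J_{\leq,i}}u_j(\bm x)$. *)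

(* Defs.v *)
From HB Require Import structures.
From mathcomp Require Import all_boot all_order all_algebra.
From mathcomp Require Import all_classical all_reals all_analysis.
Set Implicit Arguments. Unset Strict Implicit. Unset Printing Implicit Defensive.
Import Order.TTheory GRing.Theory Num.Theory.
Import numFieldNormedType.Exports.
Local Open Scope classical_set_scope.
Local Open Scope ring_scope.

Section Defs.
Variables (R : realType) (n : nat).

Definition polyhedron (P : set 'rV[R]_n) : Prop :=
  exists (m : nat) (A : 'I_m -> 'rV[R]_n) (b : 'I_m -> R),
    P = [set x | forall k, \sum_(i < n) A k ord0 i * x ord0 i <= b k].

Definition affine (f : 'rV[R]_n -> R) : Prop :=
  exists (a : 'rV[R]_n) (c : R), forall x, f x = \sum_(i < n) a ord0 i * x ord0 i + c.

Definition hyperbox (lo hi : 'rV[R]_n) : set 'rV[R]_n :=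
  [set x | forall i, lo ord0 i <= x ord0 i <= hi ord0 i].

(* J_{>=,i} and J_{<=,i} for sampled functions u and sample points xs *)
Definition f_Ld (N : nat) (u : 'I_N.+1 -> 'rV[R]_n -> R) (xs : 'I_N.+1 -> 'rV[R]_n)
    (x : 'rV[R]_n) : R :=
  let inner i := \big[Num.min/u i x]_(j < N.+1 | u i (xs i) <= u j (xs i)) u j x in
  \big[Num.max/inner ord0]_(i < N.+1) inner i.

Definition f_Lc (N : nat) (u : 'I_N.+1 -> 'rV[R]_n -> R) (xs : 'I_N.+1 -> 'rV[R]_n)
    (x : 'rV[R]_n) : R :=
  let inner i := \big[Num.max/u i x]_(j < N.+1 | u j (xs i) <= u i (xs i)) u j x in
  \big[Num.min/inner ord0]_(i < N.+1) inner i.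

End Defs.

(* Main.v *)
Require Import Defs.
From HB Require Import structures.
From mathcomp Require Import all_boot all_order all_algebra.
From mathcomp Require Import all_classical all_reals all_analysis.
From mathcomp Require Import ring lra.
Import Order.TTheory GRing.Theory Num.Theory.
Import numFieldNormedType.Exports.
Local Open Scope classical_set_scope.
Local Open Scope ring_scope.

Section OneDim.
Variables (R : realType) (K : nat) (I : 'I_K -> R -> Prop) (l : 'I_K -> R -> R) (phi : R -> R).
Hypothesis Hdesc : forall k, exists m (e c b : 'I_m -> R), forall t, I k t <-> forall q, c q + t * e q <= b q.
Hypothesis Haff : forall k, exists a b, forall t, l k t = a * t + b.
Hypothesis Hcov : forall t, 0 <= t <= 1 -> exists k, I k t.
Hypothesis Hphi : forall k t, 0 <= t <= 1 -> I k t -> phi t = l k t.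

Lemma aff_cmp (aj bj ak bk t t' : R) :
  bj < bk -> ak*t + bk <= aj*t + bj -> 0 <= t -> t <= t' -> ak*t' + bk <= aj*t'+bj.
Proof.
move=> h1 h2 h3 h4.
have hp : 0 < (aj - ak) * t by lra.
have ha : 0 < aj - ak.
  rewrite ltNge; apply/negP => hn.
  have : (aj - ak) * t <= 0 by apply: mulr_le0_ge0.
  lra.
have : (aj - ak) * t <= (aj - ak) * t' by apply: ler_wpM2l => //; apply: ltW.
lra.
Qed.

Lemma conv k a b t : I k a -> I k b -> a <= t <= b -> I k t.
Proof.
have [m [e [c [bb H]]]] := Hdesc k.
rewrite !H => Ha Hb /andP[h1 h2] q.
have := Ha q; have := Hb q.
have [he|he] := leP 0 (e q).
  have : t * e q <= b * e q by apply: ler_wpM2r.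
  lra.
have : t * e q <= a * e q by apply: ler_wnM2r => //; apply: ltW.
lra.
Qed.

Lemma closedI k s : ~ I k s -> exists d, 0 < d /\ forall t, s - d < t < s + d -> ~ I k t.
Proof.
have [m [e [c [bb H]]]] := Hdesc k.
rewrite H => /existsNP [q /negP]; rewrite -ltNge => hq.
set g := c q + s * e q - bb q.
have gpos : 0 < g by rewrite /g; lra.
exists (g / (`|e q| + 1)); split.
  by apply: divr_gt0 => //; rewrite ltr_wpDl.
move=> t /andP[h1 h2]; rewrite H => Ht; have := Ht q.
have hts : `|t - s| < g / (`|e q| + 1).
  by rewrite ltr_norml; apply/andP; split; lra.
have hE : 0 < `|e q| + 1 by rewrite ltr_wpDl.
have h3 : `|t - s| * `|e q| <= g / (`|e q| + 1) * `|e q|.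
  by apply: ler_wpM2r => //; apply: ltW.
have h4 : g / (`|e q| + 1) * `|e q| < g.
  rewrite mulrAC ltr_pdivrMr //; nra.
have h5 : - ((t - s) * e q) <= `|t - s| * `|e q|.
  by rewrite -normrM; apply: (le_trans (ler_norm _)); rewrite normrN.
have -> : c q + t * e q = g + bb q + (t - s) * e q by rewrite /g; ring.
lra.
Qed.

Lemma dists s : exists d : 'I_K -> R, forall k, 0 < d k /\ (~ I k s -> forall t, s - d k < t < s + d k -> ~ I k t).
Proof.
suff : {f : 'I_K -> R & forall k, (fun k d => 0 < d /\ (~ I k s -> forall t, s - d < t < s + d -> ~ I k t)) k (f k)}.
  by case=> f Hf; exists f.
apply: (@choice _ _ (fun k d => 0 < d /\ (~ I k s -> forall t, s - d < t < s + d -> ~ I k t))).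
move=> k; case: (pselect (I k s)) => h.
  by exists 1; split => // /(_ h).
by have [d [dp Hd]] := closedI k s h; exists d.
Qed.

Lemma left_piece s : 0 < s <= 1 -> exists j t, 0 <= t < s /\ forall r, t <= r <= s -> I j r.
Proof.
move=> /andP[s0 s1]; have [d Hd] := dists s.
set D := \big[Num.min/s]_(k < K) d k.
have Dp : 0 < D by rewrite /D; elim/big_ind: _ => // [x y hx hy|k _]; [rewrite lt_min hx hy|case: (Hd k)].
have Ds : D <= s by apply: bigmin_le_id.
have Dk : forall k, D <= d k by move=> k; apply: bigmin_le.
have [j Hj] := Hcov (s - D / 2) ltac:(apply/andP; split; lra).
have Hjs : I j s.
  apply: contrapT => hn; case: (Hd j) => _ /(_ hn (s - D/2)) H; apply: H => //.
  have := Dk j; move=> ?; apply/andP; split; lra.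
exists j, (s - D / 2); split; first by apply/andP; split; lra.
by move=> r hr; apply: conv Hj Hjs hr.
Qed.

Lemma right_piece s : 0 <= s < 1 -> exists j t, s < t <= 1 /\ forall r, s <= r <= t -> I j r.
Proof.
move=> /andP[s0 s1]; have [d Hd] := dists s.
set D := \big[Num.min/(1 - s)]_(k < K) d k.
have Dp : 0 < D by rewrite /D; elim/big_ind: _ => [|x y hx hy|k _]; [lra|rewrite lt_min hx hy|case: (Hd k)].
have Ds : D <= 1 - s by apply: bigmin_le_id.
have Dk : forall k, D <= d k by move=> k; apply: bigmin_le.
have [j Hj] := Hcov (s + D / 2) ltac:(apply/andP; split; lra).
have Hjs : I j s.
  apply: contrapT => hn; case: (Hd j) => _ /(_ hn (s + D/2)) H; apply: H => //.
  have := Dk j; move=> ?; apply/andP; split; lra.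
exists j, (s + D / 2); split; first by apply/andP; split; lra.
by move=> r hr; apply: conv Hjs Hj hr.
Qed.

Let Pt t := exists k, phi 0 <= l k 0 /\ l k t <= phi t.

Lemma step j k t t' : 0 <= t -> t <= t' -> t' <= 1 -> I j t -> I j t' ->
  phi 0 <= l k 0 -> l k t <= phi t -> Pt t'.
Proof.
move=> h0 h1 h2 Ht Ht' hk0 hkt.
have Hp' : phi t' = l j t' by apply: Hphi => //; apply/andP; split => //; apply: le_trans h1.
case: (lerP (phi 0) (l j 0)) => hj0.
  by exists j; split => //; rewrite Hp'.
exists k; split => //; rewrite Hp'.
have Hp : phi t = l j t by apply: Hphi => //; apply/andP; split => //; apply: le_trans h2.
have [aj [bj Hj]] := Haff j; have [ak [bk Hk]] := Haff k.
move: hj0 hk0 hkt; rewrite Hp !Hj !Hk !mulr0 !add0r => hj0 hk0 hkt.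
by apply: (aff_cmp _ _ _ _ _ _ _ hkt) => //; lra.
Qed.

Lemma one_dim : Pt 1.
Proof.
have P0 : Pt 0.
  have [k Hk] := Hcov 0 ltac:(apply/andP; split; lra).
  by exists k; rewrite (Hphi k 0 _ Hk) //; apply/andP; split; lra.
set S := [set t | 0 <= t <= 1 /\ forall r, 0 <= r <= t -> Pt r].
have hS : has_sup S.
  split; first exists 0.
    split; first by apply/andP; split; lra.
    by move=> r /andP[h1 h2]; have -> : r = 0 by apply: le_anti; rewrite h1 h2.
  by exists 1 => t [/andP[]].
have S0 : S 0.
  split; first by apply/andP; split; lra.
  by move=> r /andP[h1 h2]; have -> : r = 0 by apply: le_anti; rewrite h1 h2.
have hs0 : 0 <= sup S by apply: sup_upper_bound.
have hs1 : sup S <= 1 by apply: ge_sup; [exists 0 | move=> t [/andP[]]].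
have Hlt : forall r, 0 <= r < sup S -> Pt r.
  move=> r /andP[r0 rs].
  have rs' : 0 < sup S - r by rewrite subr_gt0.
  have [e [_ He] He'] := sup_adherent rs' hS.
  by apply: He; apply/andP; split => //; apply: ltW; move: He'; rewrite subKr.
have Ps : Pt (sup S).
  have [->|sp] := eqVneq (sup S) 0; first by [].
  have sp' : 0 < sup S by rewrite lt_def sp hs0.
  have [j [t [/andP[t0 ts] Hj]]] := left_piece (sup S) ltac:(by rewrite sp' hs1).
  have [k [hk0 hkt]] := Hlt t ltac:(by rewrite t0 ts).
  apply: (step j k t) => //.
  - by apply: ltW.
  - by apply: Hj; rewrite lexx ltW.
  - by apply: Hj; rewrite lexx ltW.
have s1 : sup S = 1.
  apply: contrapT => hne.
  have slt : sup S < 1 by rewrite lt_neqAle hs1 andbT; apply/eqP.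
  have [j [t [/andP[st t1] Hj]]] := right_piece (sup S) ltac:(by rewrite hs0 slt).
  have St : S t.
    split; first by apply/andP; split => //; apply: le_trans (ltW st).
    move=> r /andP[r0 rt]; case: (ltP r (sup S)) => hr; first by apply: Hlt; rewrite r0 hr.
    have [k [hk0 hks]] := Ps.
    apply: (step j k (sup S)) => //.
    - by apply: le_trans t1.
    - by apply: Hj; rewrite lexx ltW.
    - by apply: Hj; rewrite hr rt.
  have := sup_upper_bound hS St; rewrite leNgt st //.
by rewrite -s1.
Qed.
End OneDim.

Lemma key (R : realType) (n : nat) (lo hi : 'rV[R]_n) (ustar : 'rV[R]_n -> R)
  (K : nat) (Reg : 'I_K -> set 'rV[R]_n) (P : 'I_K -> 'rV[R]_n -> R) :
  (forall k, polyhedron (Reg k)) ->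
  hyperbox lo hi = \bigcup_(k in [set: 'I_K]) Reg k ->
  (forall k, affine (P k)) ->
  (forall k x, Reg k x -> ustar x = P k x) ->
  forall (sg : R) (y0 x : 'rV[R]_n), hyperbox lo hi y0 -> hyperbox lo hi x ->
  exists k, sg * ustar y0 <= sg * P k y0 /\ sg * P k x <= sg * ustar x.
Proof.
move=> Hpoly Hbox Haff Hu sg y0 x Hy0 Hx.
pose p t := y0 + t *: (x - y0).
have Hp : forall t i, p t ord0 i = y0 ord0 i + t * (x ord0 i - y0 ord0 i).
  by move=> t i; rewrite !mxE.
have lin : forall (a : 'rV[R]_n) t, \sum_(i < n) a ord0 i * p t ord0 i =
    \sum_(i < n) a ord0 i * y0 ord0 i + t * \sum_(i < n) a ord0 i * (x ord0 i - y0 ord0 i).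
  move=> a t; rewrite mulr_sumr -big_split; apply: eq_bigr => i _; rewrite Hp /=; ring.
have := @one_dim R K (fun k t => Reg k (p t)) (fun k t => sg * P k (p t)) (fun t => sg * ustar (p t)).
case.
- move=> k; have [m [A [b E]]] := Hpoly k.
  exists m, (fun q => \sum_(i < n) A q ord0 i * (x ord0 i - y0 ord0 i)),
    (fun q => \sum_(i < n) A q ord0 i * y0 ord0 i), b => t; rewrite E /=.
  by split => H q; have := H q; rewrite lin.
- move=> k; have [a [c Ha]] := Haff k.
  exists (sg * \sum_(i < n) a ord0 i * (x ord0 i - y0 ord0 i)),
    (sg * (\sum_(i < n) a ord0 i * y0 ord0 i + c)) => t; rewrite Ha lin; ring.
- move=> t /andP[t0 t1].
  have : hyperbox lo hi (p t).
    move=> i; rewrite Hp; have /andP[a1 a2] := Hy0 i; have /andP[b1 b2] := Hx i.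
    have h1 : 0 <= (1 - t) * (y0 ord0 i - lo ord0 i) by apply: mulr_ge0; lra.
    have h2 : 0 <= t * (x ord0 i - lo ord0 i) by apply: mulr_ge0; lra.
    have h3 : 0 <= (1 - t) * (hi ord0 i - y0 ord0 i) by apply: mulr_ge0; lra.
    have h4 : 0 <= t * (hi ord0 i - x ord0 i) by apply: mulr_ge0; lra.
    apply/andP; split; nra.
  by rewrite Hbox => -[k _ Hk]; exists k.
- by move=> k t _ H; rewrite /= (Hu k _ H).
move=> k [h1 h2]; exists k.
have e0 : p 0 = y0 by rewrite /p scale0r addr0.
have e1 : p 1 = x by rewrite /p scale1r addrCA subrr addr0.
by move: h1 h2; rewrite /= e0 e1.
Qed.
Theorem theorem1 (R : realType) (n : nat) (lo hi : 'rV[R]_n)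
  (ustar : 'rV[R]_n -> R)
  (* local regions and local pieces *)
  (K : nat) (Reg : 'I_K -> set 'rV[R]_n) (P : 'I_K -> 'rV[R]_n -> R)
  (* unique order regions *)
  (M : nat) (G : 'I_M -> set 'rV[R]_n)
  (* samples (N_s = N.+1), UO region index of each sample, sampled pieces *)
  (N : nat) (xs : 'I_N.+1 -> 'rV[R]_n) (gam : 'I_N.+1 -> 'I_M)
  (u : 'I_N.+1 -> 'rV[R]_n -> R)
  (eps : R) :
  (* Omega is a hyperbox *)
  (forall i, lo ord0 i <= hi ord0 i) ->
  (* u* is continuous PWA on Omega *)
  {within hyperbox lo hi, continuous ustar} ->
  (forall k, polyhedron (Reg k)) ->
  hyperbox lo hi = \bigcup_(k in [set: 'I_K]) Reg k ->
  (forall k1 k2, k1 != k2 -> interior (Reg k1) `&` interior (Reg k2) = set0) ->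
  (forall k, affine (P k)) ->
  (forall k x, Reg k x -> ustar x = P k x) ->
  (* UO regions *)
  (forall m, polyhedron (G m)) ->
  (forall m, exists k, G m `<=` Reg k) ->
  (forall m k1 k2 x y, interior (G m) x -> interior (G m) y ->
     Num.sg (P k1 x - P k2 x) = Num.sg (P k1 y - P k2 y)) ->
  hyperbox lo hi = \bigcup_(m in [set: 'I_M]) G m ->
  (* samples *)
  (forall i, interior (G (gam i)) (xs i)) ->
  (forall i, exists k, G (gam i) `<=` Reg k /\ u i = P k) ->
  (* every distinct local piece is sampled *)
  (forall k, exists i, u i = P k) ->
  (* eps is the maximum over Omega of f_Lc - f_Ld *)
  (exists2 x, hyperbox lo hi x & eps = f_Lc u xs x - f_Ld u xs x) ->
  (forall x, hyperbox lo hi x -> f_Lc u xs x - f_Ld u xs x <= eps) ->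
  (forall x, hyperbox lo hi x ->
     [/\ - eps <= f_Ld u xs x - ustar x, f_Ld u xs x - ustar x <= 0,
         0 <= f_Lc u xs x - ustar x & f_Lc u xs x - ustar x <= eps])
  /\ (eps = 0 -> forall x, hyperbox lo hi x ->
        f_Ld u xs x = ustar x /\ f_Lc u xs x = ustar x).
Proof.
move=> Hlohi Hcont Hpoly Hbox Hdisj Haff Hu HGpoly HGsub Hsg HGbox Hint Hsamp Hall Heps Hmax.
have HxsG : forall i, G (gam i) (xs i) by move=> i; apply: interior_subset.
have Hxsbox : forall i, hyperbox lo hi (xs i).
  by move=> i; rewrite HGbox; exists (gam i) => //; apply: HxsG.
have Hui : forall i, u i (xs i) = ustar (xs i).
  move=> i; have [k [Hk ->]] := Hsamp i; rewrite (Hu k) //; exact: Hk _ (HxsG i).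
have Hlow : forall x, hyperbox lo hi x -> f_Ld u xs x <= ustar x.
  move=> x Hx; rewrite /f_Ld /=.
  have inner : forall i, \big[Num.min/u i x]_(j < N.+1 | u i (xs i) <= u j (xs i)) u j x <= ustar x.
    move=> i; have [k [h1 h2]] := @key _ _ _ _ _ _ _ _ Hpoly Hbox Haff Hu 1 _ _ (Hxsbox i) Hx.
    rewrite !mul1r in h1 h2.
    have [j Hj] := Hall k.
    apply: (bigmin_inf j); first by rewrite Hui Hj.
    by rewrite Hj.
  by apply: bigmax_le => // i _; apply: inner.
have Hup : forall x, hyperbox lo hi x -> ustar x <= f_Lc u xs x.
  move=> x Hx; rewrite /f_Lc /=.
  have inner : forall i, ustar x <= \big[Num.max/u i x]_(j < N.+1 | u j (xs i) <= u i (xs i)) u j x.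
    move=> i; have [k [h1 h2]] := @key _ _ _ _ _ _ _ _ Hpoly Hbox Haff Hu (-1) _ _ (Hxsbox i) Hx.
    rewrite !mulN1r !lerN2 in h1 h2.
    have [j Hj] := Hall k.
    apply: (bigmax_sup j); first by rewrite Hui Hj.
    by rewrite Hj.
  by apply: le_bigmin => // i _; apply: inner.
split.
  move=> x Hx; have := Hlow x Hx; have := Hup x Hx; have := Hmax x Hx.
  move=> h1 h2 h3; split; lra.
move=> e0 x Hx; have := Hlow x Hx; have := Hup x Hx; have := Hmax x Hx.
rewrite e0 => h1 h2 h3; split; lra.
Qed.
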